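(* Fix a user $i$, a horizon $T\in\mathbb{N}$, integrable real random variables $X_i(t)$ and $Y_i(t)$ with $Y_i(t)\ge 0$ almost surely ($t=1,\dots,T$), a constant $C_{\text{a},i}\ge 0$, and real constants $\pi_{\text{PV}},\pi_{\text{in}},\pi_{\text{out}},\pi_{\text{gas}}$. For $a_i\ge 0$ define $$J_i(a_i,C_{\text{a},i})=a_i\pi_{\text{PV}}+\sum_{t=1}^{T}\Big\{-\pi_{\text{in}}\,\mathbb{E}\big[\max\{a_iY_i(t)-X_i(t),0\}\big]+\pi_{\text{out}}\,\mathbb{E}\big[\min\{\max\{X_i(t)-a_iY_i(t),0\},\,C_{\text{a},i}\}\big]+\pi_{\text{gas}}\,\mathbb{E}\big[\max\{X_i(t)-a_iY_i(t)-C_{\text{a},i},0\}\big]\Big\}.$$ If $\pi_{\text{gas}}\ge\pi_{\text{out}}\ge\pi_{\text{in}}$, then $J_i$ is convex with respect to $a_i$.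
   Context: This is the cost of user $i$ in a joint-storage scenario: $a_i$ is the area of PV panels, $X_i(t)$ the daily power consumption, $Y_i(t)$ the PV generation per unit area on day $t$, $C_{\text{a},i}$ the maximal daily amount of power user $i$ may buy from a manager, $\pi_{\text{in}}$ the price at which the user sells surplus power to the manager (possibly negative), $\pi_{\text{out}}$ the price at which the manager sells power to the user, $\pi_{\text{gas}}$ the unit cost of fuel-cell generation, $\pi_{\text{PV}}$ the unit price of PV panels. *)

(* Defs.v *)
From HB Require Import structures.
From mathcomp Require Import all_boot all_order all_algebra.
From mathcomp Require Import all_classical all_reals all_analysis.
Set Implicit Arguments. Unset Strict Implicit. Unset Printing Implicit Defensive.
Import Order.TTheory GRing.Theory Num.Theory.
Local Open Scope ring_scope.

Definition Ereal {d} {Omega : measurableType d} {R : realType}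
  (P : probability Omega R) (f : Omega -> R) : R := fine ('E_P[f])%E.

(* Cost J_i(a, C_a) of user i; days t = 1..T are indexed by t : 'I_T. *)
Definition Jcost {d} {Omega : measurableType d} {R : realType}
  (P : probability Omega R) (T : nat) (X Y : 'I_T -> Omega -> R)
  (piPV piin piout pigas Ca : R) (a : R) : R :=
  a * piPV +
  \sum_(t < T)
    ( - piin * Ereal P (fun w => Num.max (a * Y t w - X t w) 0)
      + piout * Ereal P (fun w => Num.min (Num.max (X t w - a * Y t w) 0) Ca)
      + pigas * Ereal P (fun w => Num.max (X t w - a * Y t w - Ca) 0)).

(* Main.v *)
Require Import Defs.
From HB Require Import structures.
From mathcomp Require Import all_boot all_order all_algebra.
From mathcomp Require Import all_classical all_reals all_analysis.
From mathcomp Require Import ring lra measurable_realfun.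
Import Order.TTheory GRing.Theory Num.Theory.
Local Open Scope ring_scope.

Section S.
Context d (Omega : measurableType d) (R : realType) (P : probability Omega R).
Notation int f := (P.-integrable setT (EFin \o f)).

Lemma ER_fin (f : Omega -> R) : int f -> (\int[P]_w (f w)%:E)%E = (Ereal P f)%:E.
Proof. move=> hf; rewrite /Ereal unlock fineK //; exact: integrable_fin_num. Qed.

Lemma int_lin (f g : Omega -> R) k1 k2 : int f -> int g ->
  int (fun w => k1 * f w + k2 * g w).
Proof.
move=> hf hg.
have := integrableD measurableT (integrableZl measurableT k1 hf) (integrableZl measurableT k2 hg).
by apply: eq_integrable => // w _.
Qed.

Lemma ER_lin (f g : Omega -> R) k1 k2 : int f -> int g ->
  Ereal P (fun w => k1 * f w + k2 * g w) = k1 * Ereal P f + k2 * Ereal P g.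
Proof.
move=> hf hg; apply: EFin_inj; rewrite -ER_fin; last exact: int_lin.
rewrite EFinD !EFinM -!ER_fin //.
rewrite -(integralZl measurableT hf) -(integralZl measurableT hg).
by rewrite -integralD //; exact: integrableZl.
Qed.

Lemma ER_le (f g : Omega -> R) : int f -> int g -> (forall w, f w <= g w) ->
  Ereal P f <= Ereal P g.
Proof.
move=> hf hg fg; rewrite -lee_fin -!ER_fin //; apply: le_integral => // w _.
by rewrite lee_fin.
Qed.

Lemma int_bound (f U V : Omega -> R) (c1 c2 c3 : R) :
  measurable_fun setT f -> int U -> int V -> 0 <= c1 -> 0 <= c2 -> 0 <= c3 ->
  (forall w, `|f w| <= c1 * `|U w| + c2 * `|V w| + c3) -> int f.
Proof.
move=> mf hU hV c10 c20 c30 hb.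
have hUa : int (fun w => `|U w|) by exact: integrable_norm.
have hVa : int (fun w => `|V w|) by exact: integrable_norm.
have hg : int (fun w => c1 * `|U w| + c2 * `|V w| + c3).
  have := int_lin _ _ 1 1 (int_lin _ _ c1 c2 hUa hVa) (finite_measure_integrable_cst P c3 measurableT).
  by apply: eq_integrable => // w _ /=; rewrite !mul1r.
apply: le_integrable hg => //.
  exact/measurable_EFinP.
move=> w _ /=; rewrite lee_fin [X in _ <= X]ger0_norm ?hb //.
by rewrite !addr_ge0 ?mulr_ge0.
Qed.
Lemma hform (piin piout pigas Ca z : R) : 0 <= Ca ->
  - piin * Num.max (- z) 0 + piout * Num.min (Num.max z 0) Ca
  + pigas * Num.max (z - Ca) 0
  = piin * z + (piout - piin) * Num.max z 0 + (pigas - piout) * Num.max (z - Ca) 0.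
Proof.
move=> C0.
case: (leP (- z) 0) => h1; case: (leP z 0) => h2; case: (leP (z - Ca) 0) => h3;
  try case: (leP z Ca) => h4; try case: (leP 0 Ca) => h5; try lra.
have -> : z = 0 by lra.
by rewrite !mulr0.
Qed.

Lemma maxconv (l u v : R) : 0 <= l <= 1 ->
  Num.max (l * u + (1 - l) * v) 0 <= l * Num.max u 0 + (1 - l) * Num.max v 0.
Proof.
move=> /andP[l0 l1].
rewrite ge_max; apply/andP; split.
  apply: lerD; apply: ler_wpM2l; rewrite ?le_max ?lexx //; lra.
apply: addr_ge0; apply: mulr_ge0; rewrite ?le_max ?lexx ?orbT //; lra.
Qed.

Definition gf (piin piout pigas Ca x y a : R) :=
  - piin * Num.max (a * y - x) 0 + piout * Num.min (Num.max (x - a * y) 0) Ca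
     + pigas * Num.max (x - a * y - Ca) 0.

Lemma ptw (piin piout pigas Ca x y a b l : R) : 0 <= Ca ->
  pigas >= piout -> piout >= piin -> 0 <= l <= 1 ->
  gf piin piout pigas Ca x y (l * a + (1 - l) * b) <=
  l * gf piin piout pigas Ca x y a + (1 - l) * gf piin piout pigas Ca x y b.
Proof.
move=> C0 h1 h2 hl.
pose g := gf piin piout pigas Ca x y.
have hf c : g c = piin * (x - c * y) + (piout - piin) * Num.max (x - c * y) 0
   + (pigas - piout) * Num.max (x - c * y - Ca) 0.
  by rewrite /g /gf -hform // opprB.
rewrite -/g !hf.
have e1 : x - (l * a + (1 - l) * b) * y = l * (x - a * y) + (1 - l) * (x - b * y) by ring.
have e2 : x - (l * a + (1 - l) * b) * y - Ca = l * (x - a * y - Ca) + (1 - l) * (x - b * y - Ca) by ring.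
rewrite e2 e1.
have p1 : 0 <= piout - piin by lra.
have p2 : 0 <= pigas - piout by lra.
have H1 := ler_wpM2l p1 (maxconv l (x - a * y) (x - b * y) hl).
have H2 := ler_wpM2l p2 (maxconv l (x - a * y - Ca) (x - b * y - Ca) hl).
lra.
Qed.

Lemma norm_max0 (u : R) : `|Num.max u 0| <= `|u|.
Proof. case: (leP u 0) => h; first by rewrite normr0 normr_ge0. by rewrite lexx. Qed.

Lemma int_terms (X Y : Omega -> R) Ca a : measurable_fun setT X ->
  measurable_fun setT Y -> int X -> int Y -> 0 <= Ca ->
  [/\ int (fun w => Num.max (a * Y w - X w) 0),
      int (fun w => Num.min (Num.max (X w - a * Y w) 0) Ca) &
      int (fun w => Num.max (X w - a * Y w - Ca) 0)].
Proof.
move=> mX mY iX iY C0.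
have maY : measurable_fun setT (fun w => a * Y w).
  exact: (measurable_funM (f := cst a) (g := Y) (measurable_cst a) mY).
have m1 : measurable_fun setT (fun w => a * Y w - X w).
  exact: (measurable_funB maY mX).
have m2 : measurable_fun setT (fun w => X w - a * Y w).
  exact: (measurable_funB mX maY).
have m3 : measurable_fun setT (fun w => X w - a * Y w - Ca).
  exact: (measurable_funB m2 (measurable_cst (Ca:R))).
split.
- apply: (int_bound _ X Y 1 `|a| 0) => //.
  + exact (measurable_maxr m1 (measurable_cst (0:R))).
  + move=> w; apply: (le_trans (norm_max0 _)).
    by rewrite mul1r addr0 -normrM (addrC `|X w|) ler_normB.
- apply: (int_bound (fun w => Num.min (Num.max (X w - a * Y w) 0) Ca) X Y 0 0 Ca) => //.
  + exact (measurable_minr (measurable_maxr m2 (measurable_cst (0:R))) (measurable_cst (Ca:R))).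
  + move=> w; rewrite !mul0r !add0r ger0_norm ?ge_min ?lexx ?orbT //.
    by rewrite le_min le_max lexx orbT C0.
- apply: (int_bound _ X Y 1 `|a| Ca) => //.
  + exact (measurable_maxr m3 (measurable_cst (0:R))).
  + move=> w; apply: (le_trans (norm_max0 _)).
    apply: (le_trans (ler_normB _ _)); rewrite (ger0_norm C0) lerD2r mul1r.
    by rewrite -normrM ler_normB.
Qed.
End S.

Theorem lemma2 (d : measure_display) (Omega : measurableType d) (R : realType)
  (P : probability Omega R) (T : nat) (X Y : 'I_T -> Omega -> R)
  (Ca piPV piin piout pigas : R) :
  (forall t, measurable_fun setT (X t)) ->
  (forall t, measurable_fun setT (Y t)) ->
  (forall t, P.-integrable setT (EFin \o X t)) ->
  (forall t, P.-integrable setT (EFin \o Y t)) ->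
  (forall t, {ae P, forall w, 0 <= Y t w}) ->
  0 <= Ca ->
  pigas >= piout -> piout >= piin ->
  forall (a b l : R), 0 <= a -> 0 <= b -> 0 <= l <= 1 ->
    Jcost P X Y piPV piin piout pigas Ca (l * a + (1 - l) * b)
    <= l * Jcost P X Y piPV piin piout pigas Ca a
       + (1 - l) * Jcost P X Y piPV piin piout pigas Ca b.
Proof.
move=> mX mY iX iY _ C0 h1 h2 a b l a0 b0 hl.
pose G c t w := gf R piin piout pigas Ca (X t w) (Y t w) c.
have iG c t : P.-integrable setT (EFin \o G c t).
  have [i1 i2 i3] := @int_terms _ _ _ P (X t) (Y t) Ca c (mX t) (mY t) (iX t) (iY t) C0.
  have := int_lin _ _ _ P _ _ 1 pigas (int_lin _ _ _ P _ _ (- piin) piout i1 i2) i3.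
  by apply: eq_integrable => // w _ /=; rewrite mul1r.
have EG c t : - piin * Ereal P (fun w => Num.max (c * Y t w - X t w) 0)
      + piout * Ereal P (fun w => Num.min (Num.max (X t w - c * Y t w) 0) Ca)
      + pigas * Ereal P (fun w => Num.max (X t w - c * Y t w - Ca) 0)
    = Ereal P (G c t).
  have [i1 i2 i3] := @int_terms _ _ _ P (X t) (Y t) Ca c (mX t) (mY t) (iX t) (iY t) C0.
  rewrite -(ER_lin _ _ _ P _ _ (- piin) piout i1 i2).
  rewrite -[Ereal P (fun w => - piin * _ + _)]mul1r.
  rewrite -(ER_lin _ _ _ P _ _ 1 pigas (int_lin _ _ _ P _ _ (- piin) piout i1 i2) i3).
  by congr Ereal; apply/funext => w; rewrite mul1r.
have key t : Ereal P (G (l * a + (1 - l) * b) t)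
    <= l * Ereal P (G a t) + (1 - l) * Ereal P (G b t).
  rewrite -ER_lin //; apply: ER_le => //; first exact: int_lin.
  by move=> w; apply: ptw.
have S : \sum_(t < T) Ereal P (G (l * a + (1 - l) * b) t)
    <= \sum_(t < T) (l * Ereal P (G a t) + (1 - l) * Ereal P (G b t)).
  by apply: ler_sum => t _; exact: key.
rewrite big_split /= -!mulr_sumr in S.
rewrite /Jcost.
under eq_bigr do rewrite EG.
under [X in _ <= l * (_ + X) + _]eq_bigr do rewrite EG.
under [X in _ <= _ + (1 - l) * (_ + X)]eq_bigr do rewrite EG.
move: S.
set s1 := \sum_(_ < T) _; set s2 := \sum_(_ < T) _; set s3 := \sum_(_ < T) _.
move=> S. nra.
Qed.
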